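(* Let $(P,r,\gamma)$ be a discounted MDP with finite $\mathcal{S},\mathcal{A}$, $r:\mathcal{S}\times\mathcal{A}\to[0,1]$, $\gamma\in(0,1)$, and let $M>0$, $\varepsilon>0$. Define $\mathcal{L}=\mathrm{Clip}_M\circ\mathcal{T}_\gamma$ and run the Span-Constrained Planning algorithm: $V^0=\mathbf 0$, $T=\big\lceil \log(\frac{3}{(1-\gamma)^2\varepsilon})/(1-\gamma)\big\rceil$, $V^{t+1}=\mathcal{L}(V^t)$ for $t=0,\dots,T-1$; choose $\widehat\pi(s)\in\arg\max_a r(s,a)+\gamma P_{sa}V^T$; set $m=\min_sV^T(s)$ and $\tilde r(s,a)=\min\{m+M-\gamma P_{sa}V^T,\ r(s,a)\}$; return $\widehat\pi,V^T,\tilde r$. Then $\mathcal{L}$ is a $\gamma$-contraction in $\|\cdot\|_\infty$ with a unique fixed point $V^\star_{\gamma,M}$, and: 1. $\|V^T-V^\star_{\gamma,M}\|_\infty\le\varepsilon$; 2. $\tilde r\le r$, $\|V^{\widehat\pi}_{\gamma,\tilde r}-V^\star_{\gamma,M}\|_\infty\le\varepsilon$, and $\|V^{\widehat\pi}_{\gamma,\tilde r}\|_{\mathrm{sp}}\le M+2\varepsilon$; 3. for any policy $\pi'$ and reward function $r'\le r$ with $\|V^{\pi'}_{\gamma,r'}\|_{\mathrm{sp}}\le M$, we have $V^\star_{\gamma,M}\ge V^{\pi'}_{\gamma,r'}$ and $V^{\widehat\pi}_\gamma\ge V^{\widehat\pi}_{\gamma,\tilde r}\ge V^\star_{\gamma,M}-\varepsilon\mathbf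 1\ge V^{\pi'}_{\gamma,r'}-\varepsilon\mathbf 1$.
   Context: $\mathcal{T}_\gamma(V)(s)=\max_a\big(r(s,a)+\gamma\sum_{s'}P(s'\mid s,a)V(s')\big)$; $P_{sa}V=\sum_{s'}P(s'\mid s,a)V(s')$. $\mathrm{Clip}_M(V)=\min\{V,(M+\min_{s'}V(s'))\mathbf 1\}$ (elementwise minimum). $V^\pi_{\gamma,r'}(s)=\mathbb{E}^\pi_s[\sum_{t\ge0}\gamma^tr'(S_t,A_t)]$ is the value of $\pi$ in the DMDP $(P,r',\gamma)$ and $V^\pi_\gamma=V^\pi_{\gamma,r}$. $\|x\|_{\mathrm{sp}}=\max_sx(s)-\min_sx(s)$. Inequalities between vectors/functions are elementwise. *)

(* Defs.v *)
From HB Require Import structures.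
From mathcomp Require Import all_boot all_order all_algebra.
From mathcomp Require Import all_classical all_reals all_analysis.
Set Implicit Arguments. Unset Strict Implicit. Unset Printing Implicit Defensive.
Import Order.TTheory GRing.Theory Num.Theory.
Local Open Scope ring_scope.

Section MDP.
Variables (R : realType) (S A : finType).

(* max / min over a finite type (0 if the type is empty) *)
Definition fmax (T : finType) (f : T -> R) : R :=
  if [pick t : T] is Some t0 then \big[Num.max/f t0]_(t : T) f t else 0.
Definition fmin (T : finType) (f : T -> R) : R :=
  if [pick t : T] is Some t0 then \big[Num.min/f t0]_(t : T) f t else 0.

(* P_{sa} V = sum_{s'} P(s'|s,a) V(s') ; P s a s' = P(s' | s, a) *)
Definition PV (P : S -> A -> S -> R) (V : S -> R) (s : S) (a : A) : R :=
  \sum_(s' : S) P s a s' * V s'.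

Definition bellman (P : S -> A -> S -> R) (r : S -> A -> R) (gamma : R)
  (V : S -> R) : S -> R :=
  fun s => fmax (fun a => r s a + gamma * PV P V s a).

Definition clip (M : R) (V : S -> R) : S -> R :=
  fun s => Num.min (V s) (M + fmin V).

Definition Lop P r gamma M (V : S -> R) : S -> R := clip M (bellman P r gamma V).

Definition supnorm (V : S -> R) : R := fmax (fun s => `|V s|).
Definition spnorm (V : S -> R) : R := fmax V - fmin V.

(* stationary (possibly randomized) policy: pi s a = probability of a in s *)
Definition is_policy (pi : S -> A -> R) : Prop :=
  (forall s a, 0 <= pi s a) /\ (forall s, \sum_(a : A) pi s a = 1).
Definition det_policy (pi : S -> A) : S -> A -> R :=
  fun s a => (a == pi s)%:R.

Definition Ppi P (pi : S -> A -> R) (f : S -> R) : S -> R :=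
  fun s => \sum_(a : A) pi s a * PV P f s a.
Definition rpi (pi : S -> A -> R) (r' : S -> A -> R) : S -> R :=
  fun s => \sum_(a : A) pi s a * r' s a.

(* V^pi_{gamma,r'}(s) = E^pi_s [ sum_t gamma^t r'(S_t,A_t) ]
   = lim_n sum_{t<n} gamma^t (P_pi^t r_pi)(s) *)
Definition value P (pi : S -> A -> R) (gamma : R) (r' : S -> A -> R) : S -> R :=
  fun s => limn (fun n : nat =>
    \sum_(t < n) gamma ^+ t * iter t (Ppi P pi) (rpi pi r') s).

Definition niter (gamma eps : R) : nat :=
  let c := Num.ceil (ln (3 / ((1 - gamma) ^+ 2 * eps)) / (1 - gamma)) in
  if (0 <= c)%R then `|c|%N else 0%N.

Definition VT P r gamma M eps : S -> R :=
  iter (niter gamma eps) (Lop P r gamma M) (fun _ => 0).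

End MDP.

(* Main.v *)
Require Import Defs.
From HB Require Import structures.
From mathcomp Require Import all_boot all_order all_algebra.
From mathcomp Require Import all_classical all_reals all_analysis.
From mathcomp Require Import ring lra.
Import Order.TTheory GRing.Theory Num.Theory.
Import numFieldNormedType.Exports.
Set Implicit Arguments. Unset Strict Implicit. Unset Printing Implicit Defensive.
Local Open Scope classical_set_scope.
Local Open Scope ring_scope.

Lemma fmax_ge (R : realType) (T : finType) (f : T -> R) t : f t <= fmax f.
Proof. rewrite /fmax; case: pickP => [t0 _|/(_ t)//]; exact: le_bigmax. Qed.

Lemma fmax_le (R : realType) (T : finType) (f : T -> R) c :
  (forall t, f t <= c) -> ((T -> False) -> 0 <= c) -> fmax f <= c.
Proof.
move=> H H0; rewrite /fmax; case: pickP => [t0 _|Hn]; last by apply: H0 => t; have := Hn t.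
by apply: bigmax_le => // i _.
Qed.

Lemma fmin_le (R : realType) (T : finType) (f : T -> R) t : fmin f <= f t.
Proof. rewrite /fmin; case: pickP => [t0 _|/(_ t)//]; exact: bigmin_le. Qed.

Lemma fmin_ge (R : realType) (T : finType) (f : T -> R) c :
  (forall t, c <= f t) -> ((T -> False) -> c <= 0) -> c <= fmin f.
Proof.
move=> H H0; rewrite /fmin; case: pickP => [t0 _|Hn]; last by apply: H0 => t; have := Hn t.
by apply: le_bigmin => // i _.
Qed.

Lemma fmax0 (R : realType) (T : finType) (f : T -> R) : (T -> False) -> fmax f = 0.
Proof. by move=> H; rewrite /fmax; case: pickP => [t0 _|//]; case: (H t0). Qed.

Lemma fmin0 (R : realType) (T : finType) (f : T -> R) : (T -> False) -> fmin f = 0.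
Proof. by move=> H; rewrite /fmin; case: pickP => [t0 _|//]; case: (H t0). Qed.

Lemma fmax_mono (R : realType) (T : finType) (f g : T -> R) c :
  (forall t, f t <= g t + c) -> 0 <= c -> fmax f <= fmax g + c.
Proof.
move=> H c0; apply: fmax_le => [t|HT]; first by apply: le_trans (H t) _; rewrite lerD2r fmax_ge.
by rewrite fmax0 // add0r.
Qed.

Lemma fmin_mono (R : realType) (T : finType) (f g : T -> R) c :
  (forall t, f t <= g t + c) -> 0 <= c -> fmin f <= fmin g + c.
Proof.
move=> H c0; rewrite -lerBlDr; apply: fmin_ge => [t|HT].
  by rewrite lerBlDr; apply: le_trans (H t); rewrite fmin_le.
by rewrite fmin0 // sub0r oppr_le0.
Qed.

Lemma snorm_ge (R : realType) (S : finType) (f : S -> R) s : `|f s| <= supnorm f.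
Proof. exact: (@fmax_ge R S (fun s => `|f s|) s). Qed.

Lemma snorm_le (R : realType) (S : finType) (f : S -> R) c :
  (forall s, `|f s| <= c) -> 0 <= c -> supnorm f <= c.
Proof. by move=> H c0; apply: fmax_le. Qed.

Lemma snorm_ge0 (R : realType) (S : finType) (f : S -> R) : 0 <= supnorm f.
Proof.
rewrite /supnorm /fmax; case: pickP => [t0 _|//].
exact: le_trans (normr_ge0 _) (le_bigmax _ _ t0).
Qed.

Lemma min_le_c (R: realType) (a b a' b' c : R) :
  a <= a' + c -> b <= b' + c -> Num.min a b <= Num.min a' b' + c.
Proof.
move=> h1 h2; rewrite -lerBlDr le_min !lerBlDr; apply/andP; split.
  by apply: le_trans h1; rewrite ge_min lexx.
by apply: le_trans h2; rewrite ge_min lexx orbT.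
Qed.


Lemma PV_mono (R : realType) (S A : finType) (P : S -> A -> S -> R)
  (HP0 : forall s a s', 0 <= P s a s') (HP1 : forall s a, \sum_(s' : S) P s a s' = 1)
  (U W : S -> R) c s a :
  (forall s', U s' <= W s' + c) -> PV P U s a <= PV P W s a + c.
Proof.
move=> H; rewrite /PV.
have -> : c = \sum_(s' : S) P s a s' * c by rewrite -mulr_suml HP1 mul1r.
rewrite -big_split /=; apply: ler_sum => s' _; rewrite -mulrDr.
exact: ler_wpM2l.
Qed.

Lemma PV_cst (R : realType) (S A : finType) (P : S -> A -> S -> R)
  (HP1 : forall s a, \sum_(s' : S) P s a s' = 1) c s a :
  PV P (fun _ => c) s a = c.
Proof. by rewrite /PV -mulr_suml HP1 mul1r. Qed.

Lemma PVB (R : realType) (S A : finType) (P : S -> A -> S -> R) (U W : S -> R) s a :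
  PV P (fun x => U x - W x) s a = PV P U s a - PV P W s a.
Proof. by rewrite /PV -sumrB; apply: eq_bigr => ? _; rewrite mulrBr. Qed.

Lemma PV_abs (R : realType) (S A : finType) (P : S -> A -> S -> R)
  (HP0 : forall s a s', 0 <= P s a s') (HP1 : forall s a, \sum_(s' : S) P s a s' = 1)
  (f : S -> R) c s a :
  (forall s', `|f s'| <= c) -> `|PV P f s a| <= c.
Proof.
move=> H.
have h1 := @PV_mono R S A P HP0 HP1 (fun _ => 0) f c s a.
have h2 := @PV_mono R S A P HP0 HP1 f (fun _ => 0) c s a.
rewrite !PV_cst // in h1 h2.
have H1 : forall s', 0 <= f s' + c.
  by move=> s'; have := H s'; rewrite ler_norml => /andP[]; lra.
have H2 : forall s', f s' <= 0 + c.
  by move=> s'; have := H s'; rewrite ler_norml => /andP[]; lra.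
have := h1 H1; have := h2 H2; rewrite ler_norml; lra.
Qed.

Lemma bell_mono (R : realType) (S A : finType) (P : S -> A -> S -> R)
  (HP0 : forall s a s', 0 <= P s a s') (HP1 : forall s a, \sum_(s' : S) P s a s' = 1)
  (r : S -> A -> R) (gamma : R) (U W : S -> R) (c : R) :
  0 <= gamma -> 0 <= c -> (forall s, U s <= W s + c) ->
  forall s, bellman P r gamma U s <= bellman P r gamma W s + gamma * c.
Proof.
move=> g0 c0 H s; rewrite /bellman; apply: fmax_mono; last exact: mulr_ge0.
move=> a; rewrite -addrA lerD2l -mulrDr; apply: ler_wpM2l => //.
exact: PV_mono.
Qed.

Lemma clip_mono (R : realType) (S : finType) (M : R) (U W : S -> R) (c : R) :
  0 <= c -> (forall s, U s <= W s + c) -> forall s, clip M U s <= clip M W s + c.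
Proof.
move=> c0 H s; rewrite /clip; apply: min_le_c => //.
by rewrite -addrA lerD2l; apply: fmin_mono.
Qed.

Lemma L_mono (R : realType) (S A : finType) (P : S -> A -> S -> R)
  (HP0 : forall s a s', 0 <= P s a s') (HP1 : forall s a, \sum_(s' : S) P s a s' = 1)
  (r : S -> A -> R) (gamma M : R) (U W : S -> R) (c : R) :
  0 <= gamma -> 0 <= c -> (forall s, U s <= W s + c) ->
  forall s, Lop P r gamma M U s <= Lop P r gamma M W s + gamma * c.
Proof.
move=> g0 c0 H s; rewrite /Lop; apply: clip_mono; first exact: mulr_ge0.
exact: bell_mono.
Qed.

Lemma L_mono0 (R : realType) (S A : finType) (P : S -> A -> S -> R)
  (HP0 : forall s a s', 0 <= P s a s') (HP1 : forall s a, \sum_(s' : S) P s a s' = 1)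
  (r : S -> A -> R) (gamma M : R) (U W : S -> R) :
  0 <= gamma -> (forall s, U s <= W s) ->
  forall s, Lop P r gamma M U s <= Lop P r gamma M W s.
Proof.
move=> g0 H s; have := @L_mono R S A P HP0 HP1 r gamma M U W 0 g0 (lexx _).
move/(_ (fun s' => ltac:(rewrite addr0; exact: H s')) s).
by rewrite mulr0 addr0.
Qed.

Lemma fmin_clip (R : realType) (S : finType) (M : R) (U : S -> R) :
  0 <= M -> fmin (clip M U) = fmin U.
Proof.
move=> M0; apply: le_anti; apply/andP; split.
  apply: fmin_ge => [s|HS]; last by rewrite fmin0.
  apply: (le_trans (fmin_le (clip M U) s)); by rewrite /clip ge_min lexx.
apply: fmin_ge => [s|HS]; last by rewrite fmin0.
by rewrite /clip le_min fmin_le /= lerDr.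
Qed.

Lemma geo0 (R : realType) (g d K : R) : 0 <= g -> g < 1 ->
  (forall n, d <= K * g ^+ n) -> d <= 0.
Proof.
move=> g0 g1 H.
have h : K * g ^+ n @[n --> \oo] --> (K * 0 : R).
  apply: cvgMl_tmp; apply: cvg_expr; by rewrite ger0_norm.
have := @limr_ge _ _ _ _ d (fun n => K * g ^+ n) (cvgP _ h) (nearW _ H).
rewrite (cvg_lim _ h) ?mulr0 //; by apply; exact: _.
Qed.

Lemma PV_ge0 (R : realType) (S A : finType) (P : S -> A -> S -> R)
  (HP0 : forall s a s', 0 <= P s a s') (HP1 : forall s a, \sum_(s' : S) P s a s' = 1)
  (U : S -> R) s a : (forall s', 0 <= U s') -> 0 <= PV P U s a.
Proof.
move=> H; have := @PV_mono R S A P HP0 HP1 (fun _ => 0) U 0 s a.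
rewrite PV_cst // addr0; apply => s'; rewrite addr0; exact: H.
Qed.

Lemma PV_leB (R : realType) (S A : finType) (P : S -> A -> S -> R)
  (HP0 : forall s a s', 0 <= P s a s') (HP1 : forall s a, \sum_(s' : S) P s a s' = 1)
  (U : S -> R) (B : R) s a : (forall s', U s' <= B) -> PV P U s a <= B.
Proof.
move=> H; have := @PV_mono R S A P HP0 HP1 U (fun _ => B) 0 s a.
rewrite PV_cst // addr0; apply => s'; rewrite ?addr0; exact: H.
Qed.

Lemma L_ge0 (R : realType) (S A : finType) (P : S -> A -> S -> R)
  (HP0 : forall s a s', 0 <= P s a s') (HP1 : forall s a, \sum_(s' : S) P s a s' = 1)
  (r : S -> A -> R) (gamma M : R) (pihat : S -> A) (U : S -> R) :
  (forall s a, 0 <= r s a) -> 0 <= gamma -> 0 <= M ->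
  (forall s, 0 <= U s) -> forall s, 0 <= Lop P r gamma M U s.
Proof.
move=> Hr g0 M0 HU.
have hb : forall s, 0 <= bellman P r gamma U s.
  move=> s; apply: le_trans (fmax_ge _ (pihat s)).
  by apply: addr_ge0 => //; apply: mulr_ge0 => //; apply: PV_ge0.
move=> s; rewrite /Lop /clip le_min hb /=; apply: addr_ge0 => //.
by apply: fmin_ge => // _; rewrite lexx.
Qed.

Lemma L_leB (R : realType) (S A : finType) (P : S -> A -> S -> R)
  (HP0 : forall s a s', 0 <= P s a s') (HP1 : forall s a, \sum_(s' : S) P s a s' = 1)
  (r : S -> A -> R) (gamma M B : R) (U : S -> R) :
  (forall s a, r s a <= 1) -> 0 <= gamma -> 0 <= B -> 1 + gamma * B <= B ->
  (forall s, U s <= B) -> forall s, Lop P r gamma M U s <= B.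
Proof.
move=> Hr g0 B0 HB HU s; rewrite /Lop /clip ge_min; apply/orP; left.
rewrite /bellman; apply: fmax_le => // a.
apply: le_trans HB; apply: lerD => //; apply: ler_wpM2l => //.
exact: PV_leB.
Qed.

Lemma Vstar_ex (R : realType) (S A : finType) (P : S -> A -> S -> R)
  (HP0 : forall s a s', 0 <= P s a s') (HP1 : forall s a, \sum_(s' : S) P s a s' = 1)
  (r : S -> A -> R) (gamma M : R) (pihat : S -> A) :
  (forall s a, 0 <= r s a <= 1) -> 0 <= gamma -> gamma < 1 -> 0 <= M ->
  exists Vs : S -> R, Lop P r gamma M Vs = Vs /\
   (forall n s, iter n (Lop P r gamma M) (fun _ => 0) s <= Vs s <=
        iter n (Lop P r gamma M) (fun _ => 0) s + gamma ^+ n * (1 - gamma)^-1) /\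
   (forall n s, iter n (Lop P r gamma M) (fun _ => 0) s <=
                iter n.+1 (Lop P r gamma M) (fun _ => 0) s) /\
   (forall s, 0 <= Vs s <= (1 - gamma)^-1).
Proof.
move=> Hr g0 g1 M0.
set L := Lop P r gamma M; set x := fun n => iter n L (fun _ => 0).
rewrite -/(x _).
set B := (1 - gamma)^-1.
have B0 : 0 <= B by rewrite /B invr_ge0 subr_ge0 ltW.
have HB : 1 + gamma * B <= B.
  rewrite /B; have h : 1 - gamma != 0 by rewrite subr_eq0 eq_sym lt_eqF.
  by rewrite le_eqVlt; apply/orP; left; apply/eqP; field.
have Hr0 : forall s a, 0 <= r s a by move=> s a; case/andP: (Hr s a).
have Hr1 : forall s a, r s a <= 1 by move=> s a; case/andP: (Hr s a).
have xS n : x n.+1 = L (x n) by [].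
have x0 n s : 0 <= x n s.
  elim: n s => [|n IH] s; first by rewrite /x /=.
  by rewrite xS; apply: L_ge0.
have xB n s : x n s <= B.
  elim: n s => [|n IH] s; first by rewrite /x /=.
  by rewrite xS; apply: L_leB.
have xinc n s : x n s <= x n.+1 s.
  elim: n s => [|n IH] s; first by have := x0 1%N s.
  by rewrite (xS n.+1) (xS n); apply: L_mono0.
have ndx s : {homo (fun n => x n s) : n m / (n <= m)%N >-> n <= m}.
  by apply/nondecreasing_seqP => n; apply: xinc.
have cvx s : cvgn (fun n => x n s).
  apply: nondecreasing_is_cvgn => //; exists B => _ [n _ <-]; exact: xB.
pose Vs s := limn (fun n => x n s).
have xle n s : x n s <= Vs s := nondecreasing_cvgn_le (ndx s) (cvx s) n.
have VsB s : Vs s <= B by apply: limr_le => //; apply: nearW => n; exact: xB.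
have VsL s : Vs s <= L Vs s.
  apply: limr_le => //; apply: nearW => n; apply: le_trans (xinc n s) _.
  rewrite xS; apply: L_mono0 => // s'; exact: xle.
have err n s : Vs s <= x n s + gamma ^+ n * B.
  elim: n s => [|n IH] s; first by rewrite expr0 mul1r /x /= add0r.
  apply: le_trans (VsL s) _; rewrite xS exprS -mulrA.
  apply: L_mono => //; apply: mulr_ge0 => //; exact: exprn_ge0.
have LVs : L Vs = Vs.
  apply/funext => s; apply/le_anti; rewrite VsL andbT.
  rewrite -subr_le0; apply: (@geo0 _ gamma _ (gamma * B)) => // n.
  rewrite lerBlDl; apply: le_trans (L_mono HP0 HP1 _ _ g0 _ (err n) s) _.
    by apply: mulr_ge0 => //; exact: exprn_ge0.
  have -> : gamma * (gamma ^+ n * B) = gamma * B * gamma ^+ n by ring.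
  rewrite lerD2r -/L -xS; exact: xle.
exists Vs; split => //; split; first by move=> n s; rewrite xle err.
split => // s; rewrite VsB andbT; apply: le_trans (xle 0%N s); exact: x0.
Qed.

Lemma cvg_sumI (R : realType) (I : finType) (f : I -> nat -> R) (l : I -> R) :
  (forall i, f i n @[n --> \oo] --> l i) ->
  (\sum_(i : I) f i n) @[n --> \oo] --> \sum_(i : I) l i.
Proof.
move=> H; apply: cvg_big => //; exact: add_continuous.
Qed.

Lemma Ppi_abs (R : realType) (S A : finType) (P : S -> A -> S -> R)
  (HP0 : forall s a s', 0 <= P s a s') (HP1 : forall s a, \sum_(s' : S) P s a s' = 1)
  (pi : S -> A -> R) (f : S -> R) (c : R) s :
  is_policy pi -> (forall s', `|f s'| <= c) -> `|Ppi P pi f s| <= c.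
Proof.
move=> [pi0 pi1] H; rewrite /Ppi; apply: le_trans (ler_norm_sum _ _ _) _.
have -> : c = \sum_(a : A) pi s a * c by rewrite -mulr_suml pi1 mul1r.
apply: ler_sum => a _; rewrite normrM ger0_norm //; apply: ler_wpM2l => //.
exact: PV_abs.
Qed.

Lemma PV_sum (R : realType) (S A : finType) (P : S -> A -> S -> R) n
  (c : nat -> R) (f : nat -> S -> R) s a :
  PV P (fun s' => \sum_(t < n) c t * f t s') s a = \sum_(t < n) c t * PV P (f t) s a.
Proof.
rewrite /PV; under eq_bigr do rewrite mulr_sumr.
rewrite exchange_big; apply: eq_bigr => t _; rewrite mulr_sumr.
by apply: eq_bigr => s' _; rewrite mulrCA.
Qed.

Lemma Ppi_sum (R : realType) (S A : finType) (P : S -> A -> S -> R) (pi : S -> A -> R) n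
  (c : nat -> R) (f : nat -> S -> R) s :
  Ppi P pi (fun s' => \sum_(t < n) c t * f t s') s = \sum_(t < n) c t * Ppi P pi (f t) s.
Proof.
rewrite /Ppi; under eq_bigr do rewrite PV_sum mulr_sumr.
rewrite exchange_big; apply: eq_bigr => t _; rewrite mulr_sumr.
by apply: eq_bigr => a _; rewrite mulrCA.
Qed.

Lemma value_eq (R : realType) (S A : finType) (P : S -> A -> S -> R)
  (HP0 : forall s a s', 0 <= P s a s') (HP1 : forall s a, \sum_(s' : S) P s a s' = 1)
  (pi : S -> A -> R) (gamma : R) (r' : S -> A -> R) :
  is_policy pi -> 0 <= gamma -> gamma < 1 ->
  forall s, value P pi gamma r' s = rpi pi r' s + gamma * Ppi P pi (value P pi gamma r') s.
Proof.
move=> Hpi g0 g1.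
set g := fun t => iter t (Ppi P pi) (rpi pi r').
set K := supnorm (rpi pi r').
have gS t : g t.+1 = Ppi P pi (g t) by [].
have gK t s : `|g t s| <= K.
  elim: t s => [|t IH] s; first exact: snorm_ge.
  by rewrite gS; apply: Ppi_abs.
set u := fun n s => \sum_(t < n) gamma ^+ t * g t s.
have Hv : value P pi gamma r' = fun s => limn (fun n => u n s) by [].
have cvu s : cvgn (fun n => u n s).
  have -> : (fun n => u n s) = series (fun t => gamma ^+ t * g t s).
    by apply/funext => n; rewrite /series /= big_mkord.
  apply: normed_cvg; apply: (@series_le_cvg _ _ (geometric K gamma)) => //.
  - by move=> n; exact: normr_ge0.
  - by move=> n; rewrite /geometric /=; apply: mulr_ge0; [exact: snorm_ge0|exact: exprn_ge0].
  - move=> n; rewrite /geometric /= normrM ger0_norm ?exprn_ge0 // mulrC.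
    by apply: ler_wpM2r; [exact: exprn_ge0|exact: gK].
  - by apply: is_cvg_geometric_series; rewrite ger0_norm.
have uS n s : u n.+1 s = rpi pi r' s + gamma * Ppi P pi (u n) s.
  rewrite /u big_ord_recl /= expr0 mul1r; congr (_ + _).
  rewrite (Ppi_sum P pi n (fun t => gamma ^+ t) g s) mulr_sumr; apply: eq_bigr => t _.
  by rewrite add0n /bump /= add1n exprS mulrA.
move=> s; rewrite Hv.
have h1 : (fun n => u n.+1 s) @ \oo --> limn (fun n => u n s).
  by rewrite (cvg_shiftS (fun n => u n s)); exact: cvu.
have h2 : (fun n => u n.+1 s) @ \oo -->
           rpi pi r' s + gamma * Ppi P pi (fun s => limn (fun n => u n s)) s.
  have -> : (fun n => u n.+1 s) = (fun n => rpi pi r' s + gamma * Ppi P pi (u n) s).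
    by apply/funext => n; rewrite uS.
  apply: cvgD; first exact: cvg_cst.
  apply: cvgMl_tmp; rewrite /Ppi; apply: cvg_sumI => a.
  apply: cvgMl_tmp; rewrite /PV; apply: cvg_sumI => s'.
  apply: cvgMl_tmp; exact: cvu.
exact: (cvg_unique _ h1 h2).
Qed.

Lemma niter_ge (R : realType) (gamma eps : R) : 0 < gamma -> gamma < 1 -> 0 < eps ->
  ln (3 / ((1 - gamma) ^+ 2 * eps)) <= (niter gamma eps)%:R * (1 - gamma).
Proof.
move=> g0 g1 e0; have h1 : 0 < 1 - gamma by rewrite subr_gt0.
rewrite /niter; set y := ln _ / _.
have hy := ceil_ge y.
case: ifP => hc.
  rewrite natr_absz ger0_norm // -ler_pdivrMr //; exact: hy.
move: hc => /negbT; rewrite -ltNge => hc.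
have : y < 0 by apply: le_lt_trans hy _; rewrite ltrz0.
rewrite /y pmulr_llt0 ?invr_gt0 // mul0r => h; exact: ltW.
Qed.

Lemma niter_bound (R : realType) (gamma eps : R) : 0 < gamma -> gamma < 1 -> 0 < eps ->
  3 * gamma ^+ (niter gamma eps) <= (1 - gamma) ^+ 2 * eps.
Proof.
move=> g0 g1 e0; have h1 : 0 < 1 - gamma by rewrite subr_gt0.
set T := niter gamma eps.
set x := 3 / ((1 - gamma) ^+ 2 * eps).
have x0 : 0 < x by rewrite /x divr_gt0 // mulr_gt0 // exprn_gt0.
have hT := niter_ge g0 g1 e0; rewrite -/T -/x in hT.
have hl : ln gamma <= gamma - 1.
  have := @le_ln1Dx R (gamma - 1); have -> : 1 + (gamma - 1) = gamma by ring.
  apply; lra.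
have T0 : (0 : R) <= T%:R by exact: ler0n.
have : ln (gamma ^+ T) <= ln (x^-1).
  rewrite lnXn // lnV ?posrE // -mulr_natl; nra.
rewrite ler_ln ?posrE ?exprn_gt0 ?invr_gt0 // /x invf_div => h.
have h2 : 0 < (1 - gamma) ^+ 2 * eps by rewrite mulr_gt0 // exprn_gt0.
by rewrite mulrC -ler_pdivlMr.
Qed.

Lemma L_contr (R : realType) (S A : finType) (P : S -> A -> S -> R)
  (HP0 : forall s a s', 0 <= P s a s') (HP1 : forall s a, \sum_(s' : S) P s a s' = 1)
  (r : S -> A -> R) (gamma M : R) (U W : S -> R) s : 0 <= gamma ->
  `|Lop P r gamma M U s - Lop P r gamma M W s| <= gamma * supnorm (fun s => U s - W s).
Proof.
move=> g0; set c := supnorm _.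
have c0 : 0 <= c by exact: snorm_ge0.
have H1 : forall s, U s <= W s + c.
  move=> s'; have := snorm_ge (fun s => U s - W s) s'; rewrite -/c ler_norml => /andP[_]; lra.
have H2 : forall s, W s <= U s + c.
  move=> s'; have := snorm_ge (fun s => U s - W s) s'; rewrite -/c ler_norml => /andP[]; lra.
have := L_mono HP0 HP1 r M g0 c0 H1 s; have := L_mono HP0 HP1 r M g0 c0 H2 s.
rewrite ler_norml; lra.
Qed.

Lemma det_sum (R : realType) (S A : finType) (pihat : S -> A) (F : A -> R) s :
  \sum_(a : A) @det_policy R S A pihat s a * F a = F (pihat s).
Proof.
rewrite (bigD1 (pihat s)) //= /det_policy eqxx mul1r big1 ?addr0 // => a /negbTE ->.
by rewrite mul0r.
Qed.

Lemma det_is_policy (R : realType) (S A : finType) (pihat : S -> A) :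
  is_policy (@det_policy R S A pihat).
Proof.
split; first by move=> s a; rewrite /det_policy ler0n.
move=> s; have := @det_sum R S A pihat (fun _ => 1) s; under eq_bigr do rewrite mulr1.
by [].
Qed.

Lemma min_addr (R : realType) (a b c : R) : Num.min a b + c = Num.min (a + c) (b + c).
Proof.
apply/le_anti/andP; split.
  by rewrite le_min !lerD2r ge_min lexx /= ge_min lexx orbT.
rewrite -lerBlDr le_min !lerBlDr; apply/andP; split.
  by rewrite ge_min lexx.
by rewrite ge_min lexx orbT.
Qed.

Lemma PV_geB (R : realType) (S A : finType) (P : S -> A -> S -> R)
  (HP0 : forall s a s', 0 <= P s a s') (HP1 : forall s a, \sum_(s' : S) P s a s' = 1)
  (U : S -> R) (B : R) s a : (forall s', B <= U s') -> B <= PV P U s a.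
Proof.
move=> H; have := @PV_mono R S A P HP0 HP1 (fun _ => B) U 0 s a.
rewrite PV_cst // addr0; apply => s'; rewrite ?addr0; exact: H.
Qed.

Unset Implicit Arguments.
Local Close Scope classical_set_scope.

Theorem lemma3 (R : realType) (S A : finType)
  (P : S -> A -> S -> R) (r : S -> A -> R) (gamma M eps : R)
  (HP0 : forall s a s', 0 <= P s a s')
  (HP1 : forall s a, \sum_(s' : S) P s a s' = 1)
  (Hr : forall s a, 0 <= r s a <= 1)
  (Hg : 0 < gamma < 1) (HM : 0 < M) (Heps : 0 < eps)
  (pihat : S -> A)
  (Hpihat : forall s a,
     r s a + gamma * PV P (VT P r gamma M eps) s a
       <= r s (pihat s) + gamma * PV P (VT P r gamma M eps) s (pihat s)) :
  let L := Lop P r gamma M in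
  let V := VT P r gamma M eps in
  let m := fmin V in
  let rt := fun s a => Num.min (m + M - gamma * PV P V s a) (r s a) in
  let Vhat := value P (@det_policy R S A pihat) gamma rt in
  (forall U W : S -> R,
     supnorm (fun s => L U s - L W s) <= gamma * supnorm (fun s => U s - W s)) /\
  exists Vstar : S -> R,
    L Vstar = Vstar /\ (forall W, L W = W -> W = Vstar) /\
    (* 1 *)
    supnorm (fun s => V s - Vstar s) <= eps /\
    (* 2 *)
    (forall s a, rt s a <= r s a) /\
    supnorm (fun s => Vhat s - Vstar s) <= eps /\
    spnorm Vhat <= M + 2 * eps /\
    (* 3 (parts not depending on pi', r') *)
    (forall s, Vhat s <= value P (@det_policy R S A pihat) gamma r s /\
               Vstar s - eps <= Vhat s) /\
    (* 3 *)
    (forall (pi' : S -> A -> R) (r' : S -> A -> R),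
       is_policy pi' -> (forall s a, r' s a <= r s a) ->
       spnorm (value P pi' gamma r') <= M ->
       (forall s, value P pi' gamma r' s <= Vstar s) /\
       (forall s,
          Vhat s <= value P (@det_policy R S A pihat) gamma r s /\
          Vstar s - eps <= Vhat s /\
          value P pi' gamma r' s - eps <= Vstar s - eps)).
Proof.
move=> L V m rt Vhat.
case/andP: Hg => g0' g1; have g0 := ltW g0'; have M0 := ltW HM.
have Hr0 : forall s a, 0 <= r s a by move=> s a; case/andP: (Hr s a).
have Hr1 : forall s a, r s a <= 1 by move=> s a; case/andP: (Hr s a).
have Lc : forall U W s, `|L U s - L W s| <= gamma * supnorm (fun s => U s - W s).
  by move=> U W s; apply: L_contr.
split.
  move=> U W; apply: snorm_le => //; apply: mulr_ge0 => //; exact: snorm_ge0.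
have [Vs [LVs [err [xinc VsB]]]] := @Vstar_ex R S A P HP0 HP1 r gamma M pihat Hr g0 g1 M0.
rewrite -/L in LVs err xinc.
set B := (1 - gamma)^-1 in err VsB.
set T := niter gamma eps.
set x := fun n => iter n L (fun _ => 0).
have VE : V = x T by [].
have xS n : x n.+1 = L (x n) by [].
have B0 : 0 <= B by rewrite /B invr_ge0 subr_ge0 ltW.
have HB : B * (1 - gamma) = 1 by rewrite /B mulVf // subr_eq0 eq_sym lt_eqF.
have B1 : 1 <= B.
  have : 0 <= gamma * B by exact: mulr_ge0.
  nra.
set e := gamma ^+ T * B.
have e0 : 0 <= e by rewrite /e mulr_ge0 ?exprn_ge0.
have he : 3 * e * B <= eps.
  have h := niter_bound g0' g1 Heps; rewrite -/T in h.
  have : 3 * gamma ^+ T * (B * B) <= (1 - gamma) ^+ 2 * eps * (B * B).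
    by apply: ler_wpM2r => //; exact: mulr_ge0.
  have -> : (1 - gamma) ^+ 2 * eps * (B * B) = eps * (B * (1 - gamma)) ^+ 2 by ring.
  by rewrite HB expr1n mulr1 /e !mulrA.
have eB : e <= e * B by rewrite ler_peMr.
have errV s : V s <= Vs s <= V s + e by rewrite VE; exact: err.
exists Vs; split => //; split.
  move=> W LW; apply/funext => s.
  have h0 : supnorm (fun s => W s - Vs s) <= gamma * supnorm (fun s => W s - Vs s).
    apply: snorm_le => [s'|]; last by apply: mulr_ge0 => //; exact: snorm_ge0.
    by rewrite -{1}LW -{1}LVs; apply: Lc.
  have h1 : supnorm (fun s => W s - Vs s) <= 0.
    have := snorm_ge0 (fun s => W s - Vs s); nra.
  have := snorm_ge (fun s => W s - Vs s) s.
  move=> h2; have h3 : `|W s - Vs s| <= 0 by apply: le_trans h2 h1.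
  by apply/eqP; rewrite -subr_eq0 -normr_le0.
split.
  apply: snorm_le => [s|]; last exact: ltW.
  have := errV s; rewrite distrC ler_norml => /andP[h1 h2]; apply/andP; split; nra.
split; first by move=> s a; rewrite /rt ge_min lexx orbT.
have dpol := @det_is_policy R S A pihat.
have VhatE s : Vhat s = rt s (pihat s) + gamma * PV P Vhat s (pihat s).
  by rewrite /Vhat (value_eq HP0 HP1 rt dpol g0 g1 s) /rpi /Ppi !det_sum.
have bellV s : bellman P r gamma V s = r s (pihat s) + gamma * PV P V s (pihat s).
  apply/le_anti/andP; split; last exact: (fmax_ge (fun a => r s a + gamma * PV P V s a) (pihat s)).
  apply: fmax_le => [a|]; first exact: Hpihat.
  by move=> /(_ (pihat s)).
have LVle s : V s <= L V s <= V s + e.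
  have h1 := xinc T s; have h2 := err T.+1 s; have h3 := errV s.
  rewrite -/(x T) -/(x T.+1) -VE xS -VE in h1 h2 *.
  case/andP: h2 => h2 _; case/andP: h3 => _ h3; apply/andP; split => //.
  exact: le_trans h2 h3.
have fminLV : m <= fmin (L V) <= m + e.
  apply/andP; split.
    have := @fmin_mono R S V (L V) 0; rewrite addr0; apply => // s.
    by rewrite addr0; case/andP: (LVle s).
  by apply: fmin_mono => // s; case/andP: (LVle s).
have fminTV : fmin (L V) = fmin (bellman P r gamma V) by rewrite /L /Lop fmin_clip.
have WE s : rt s (pihat s) + gamma * PV P V s (pihat s) = Num.min (m + M) (bellman P r gamma V s).
  by rewrite /rt min_addr subrK bellV.
have WLV s : `|(rt s (pihat s) + gamma * PV P V s (pihat s)) - L V s| <= e.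
  rewrite WE; have -> : L V s = Num.min (bellman P r gamma V s) (M + fmin (L V)).
    by rewrite fminTV.
  case/andP: fminLV => f1 f2.
  rewrite ler_norml; apply/andP; split.
    rewrite lerNl opprB lerBlDl minC addrC; apply: min_le_c; lra.
  rewrite lerBlDl addrC minC; apply: min_le_c; lra.
have WV s : `|(rt s (pihat s) + gamma * PV P V s (pihat s)) - V s| <= 2 * e.
  have := WLV s; case/andP: (LVle s); rewrite !ler_norml; lra.
set d := supnorm (fun s => Vhat s - V s).
have d0 : 0 <= d by exact: snorm_ge0.
have hd : d <= 2 * e + gamma * d.
  apply: snorm_le => [s|]; last by apply: addr_ge0; [lra | exact: mulr_ge0].
  have -> : Vhat s - V s = (rt s (pihat s) + gamma * PV P V s (pihat s) - V s)
        + gamma * PV P (fun s => Vhat s - V s) s (pihat s).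
    by rewrite PVB {1}VhatE; ring.
  apply: le_trans (ler_normD _ _) _; apply: lerD; first exact: WV.
  rewrite normrM ger0_norm //; apply: ler_wpM2l => //; apply: PV_abs => // s'.
  exact: snorm_ge.
have hd2 : d <= 2 * e * B.
  have E : B * (d - gamma * d) = d * (B * (1 - gamma)) by ring.
  rewrite HB mulr1 in E.
  have : B * (d - gamma * d) <= B * (2 * e) by apply: ler_wpM2l => //; lra.
  rewrite E; lra.
have VhVs s : `|Vhat s - Vs s| <= eps.
  have h1 : `|Vhat s - V s| <= d by exact: (snorm_ge (fun s => Vhat s - V s)).
  have := errV s; move: h1; rewrite !ler_norml; nra.
split; first by apply: snorm_le => //; exact: ltW.
have Vhge s : Vs s - eps <= Vhat s.
  by have := VhVs s; rewrite ler_norml; lra.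
have fVs : fmin Vs = fmin (bellman P r gamma Vs).
  by rewrite -[in LHS]LVs /L /Lop fmin_clip.
have VsM s : Vs s <= M + fmin Vs.
  have : L Vs s <= M + fmin Vs by rewrite /L /Lop /clip fVs ge_min lexx orbT.
  by rewrite LVs.
split.
  rewrite /spnorm.
  have h1 : fmax Vhat <= fmax Vs + eps.
    apply: fmax_mono => [s|]; last exact: ltW.
    by have := VhVs s; rewrite ler_norml; lra.
  have h2 : fmin Vs <= fmin Vhat + eps.
    apply: fmin_mono => [s|]; last exact: ltW.
    by have := VhVs s; rewrite ler_norml; lra.
  have h3 : fmax Vs <= M + fmin Vs.
    apply: fmax_le => // HS; by rewrite fmin0 // addr0.
  lra.
set Vr := value P (@det_policy R S A pihat) gamma r.
have VrE s : Vr s = r s (pihat s) + gamma * PV P Vr s (pihat s).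
  by rewrite /Vr (value_eq HP0 HP1 r dpol g0 g1 s) /rpi /Ppi !det_sum.
set D := fun s => Vr s - Vhat s.
have DE s : D s = (r s (pihat s) - rt s (pihat s)) + gamma * PV P D s (pihat s).
  by rewrite /D PVB {1}VrE {1}VhatE; ring.
have Dge s : Vhat s <= Vr s.
  set dd := fmin D.
  have h : gamma * dd <= dd.
    apply: fmin_ge => [s'|]; last by move/(_ s).
    rewrite DE.
    have h1 : rt s' (pihat s') <= r s' (pihat s') by rewrite /rt ge_min lexx orbT.
    have h2 : dd <= PV P D s' (pihat s') by apply: PV_geB => // s''; exact: fmin_le.
    have h3 : gamma * dd <= gamma * PV P D s' (pihat s') by exact: ler_wpM2l.
    lra.
  have dd0 : 0 <= dd.
    have : 0 <= dd * (1 - gamma) by rewrite mulrBr mulr1 subr_ge0 mulrC.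
    by rewrite pmulr_lge0 // subr_gt0.
  by have := fmin_le D s; rewrite -/dd /D /=; lra.
split; first by move=> s; rewrite Dge Vhge.
move=> pi' r' Hpi' Hr' Hsp.
set U := value P pi' gamma r'.
have [pi0 pi1] := Hpi'.
have UE s : U s = \sum_(a : A) pi' s a * (r' s a + gamma * PV P U s a).
  rewrite /U (value_eq HP0 HP1 r' Hpi' g0 g1 s) /rpi /Ppi mulr_sumr -big_split /=.
  by apply: eq_bigr => a _ /=; rewrite mulrDr mulrCA.
have UT s : U s <= bellman P r gamma U s.
  rewrite UE.
  have -> : bellman P r gamma U s = \sum_(a : A) pi' s a * bellman P r gamma U s.
    by rewrite -mulr_suml pi1 mul1r.
  apply: ler_sum => a _; apply: ler_wpM2l => //.
  apply: le_trans _ (fmax_ge (fun a => r s a + gamma * PV P U s a) a).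
  by rewrite lerD2r.
have UM s : U s <= M + fmin U.
  by have := fmax_ge U s; move: Hsp; rewrite /spnorm; lra.
have ULU s : U s <= L U s.
  rewrite /L /Lop /clip le_min UT /=; apply: le_trans (UM s) _; rewrite lerD2l.
  have := @fmin_mono R S U (bellman P r gamma U) 0; rewrite addr0; apply => // s'.
  by rewrite addr0; exact: UT.
have Ux n s : U s <= x n s + gamma ^+ n * supnorm U.
  elim: n s => [|n IH] s.
    rewrite expr0 mul1r /x /= add0r; apply: le_trans (ler_norm _) _.
    exact: snorm_ge.
  apply: le_trans (ULU s) _; rewrite xS exprS -mulrA; apply: L_mono => //.
  by apply: mulr_ge0; [exact: exprn_ge0 | exact: snorm_ge0].
have UVs s : U s <= Vs s.
  rewrite -subr_le0; apply: (@geo0 R gamma _ (supnorm U)) => // n.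
  have := Ux n s; have := err n s; rewrite -/(x n) => /andP[h _]; lra.
split; first exact: UVs.
move=> s; split; first exact: Dge.
split; first exact: Vhge.
by rewrite lerD2r.
Qed.
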